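(* In the standing setting below, suppose $0\le\rho<\rho_m$ in $\Omega_T$ for a constant $\rho_m>1$, and let $b\ge0$, $e\ge0$ be given continuous functions on $\Omega_T$ with $e$ continuously differentiable in $r$ (twice, as needed for the equation to be classical). Let $n\ge0$ be a classical solution of $$\partial_t n+\frac1r\partial_r(rvn)=\frac1r\partial_r(rD_n\partial_r n)-\frac1r\partial_r\Big(r\,\chi_n\rho\, n\, H(1-n/n_m)\,\Phi(\partial_r e)\Big)+k_{nb}\,b\frac{e}{1+e}+k_n\, n\frac{e}{1+e}-\lambda_{nb}\, n b-\lambda_{nn}n^2$$ in $R(t)<r<L$, $0<t<T$, with boundary conditions $(1-\gamma)n+\gamma L\big(\partial_r n-\frac{\chi_n}{D_n}\rho\, n\,H(1-n/n_m)\Phi(\partial_r e)\big)=0$ at $r=L$, $\partial_r n=0$ at $r=R(t)$, and initial condition $n(r,0)=0$. Here $\gamma\in[0,1]$ and $D_n,\chi_n,n_m,k_{nb},k_n,\lambda_{nb},\lambda_{nn},k_{sg}$ are positive constants. Then, with $$N=\max\Big\{\frac{k_{nb}}{\lambda_{nb}},\ \frac{k_n+\beta(\rho_m-1)}{\lambda_{nn}},\ n_m\Big\},$$ one has $0\le n(r,t)\le N$ in $\Omega_T$.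
   Context: Standing setting. Fix constants $L>0$, $0<R_0<L$, $\beta>0$, $T>0$. Let $R\in C^1([0,T))$ with $R(0)=R_0$ and $0<R(t)<L$, and set $\Omega_T=\{(r,t): R(t)\le r\le L,\ 0\le t<T\}$. Let $\rho\ge 0$ be a classical (continuously differentiable) function on $\Omega_T$ (the matrix density), and define the pressure $P(r,t)=P(\rho(r,t))$ where $P(\rho)=\beta(\rho-1)$ for $\rho\ge1$ and $P(\rho)=0$ for $\rho<1$. Let $v(r,t)$ be a classical function on $\Omega_T$ (twice continuously differentiable in $r$) satisfying $\frac1r\partial_r(r\,\partial_r v)-\frac{v}{r^2}=\partial_r P$ for $R(t)<r<L$, with $v(L,t)=0$, $\partial_r v(R(t),t)=P(R(t),t)$, and the free-boundary law $\dot R(t)=v(R(t),t)$. Define $Q(t)=\int_{R(t)}^L y\,P(y,t)\,dy$. Further notation: $H(u)=\dfrac{u^6}{10^{-6}+u^6}$ for $u\ge0$ and $H(u)=0$ for $u<0$; $\Phi(s)=s/\sqrt{1+k_{sg}s^2}$ with a constant $k_{sg}>0$ (the bounded chemotactic gradient response). *)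

(* Defs.v *)
From Stdlib Require Import Reals Lra.
Open Scope R_scope.

Definition Hsw (u : R) : R :=
  if Rle_dec 0 u then u ^ 6 / (/ 1000000 + u ^ 6) else 0.

Definition Phi (ksg s : R) : R := s / sqrt (1 + ksg * s ^ 2).

Definition Pres (beta x : R) : R :=
  if Rle_dec 1 x then beta * (x - 1) else 0.

Definition OmegaT (Rb : R -> R) (L T r t : R) : Prop :=
  Rb t <= r <= L /\ 0 <= t < T.

Definition OmegaI (Rb : R -> R) (L T r t : R) : Prop :=
  Rb t < r < L /\ 0 < t < T.

Definition cont2_on (f : R -> R -> R) (D : R -> R -> Prop) : Prop :=
  forall r t, D r t -> forall eps, 0 < eps -> exists delta, 0 < delta /\
    forall r' t', D r' t' -> Rabs (r' - r) < delta -> Rabs (t' - t) < delta ->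
      Rabs (f r' t' - f r t) < eps.

Definition cont1_on (f : R -> R) (S : R -> Prop) : Prop :=
  forall t, S t -> forall eps, 0 < eps -> exists delta, 0 < delta /\
    forall t', S t' -> Rabs (t' - t) < delta -> Rabs (f t' - f t) < eps.

(* Main.v *)
Require Import Defs.
From Stdlib Require Import Reals Lra Classical.
Open Scope R_scope.


Ltac rcases := repeat match goal with
 | |- context [Rcase_abs ?x] => destruct (Rcase_abs x)
 | H: context [Rcase_abs ?x] |- _ => destruct (Rcase_abs x)
 | |- context [Rle_dec ?x ?y] => destruct (Rle_dec x y)
 | H: context [Rle_dec ?x ?y] |- _ => destruct (Rle_dec x y)
 end.
Ltac rsolve := unfold Rabs, Rmax, Rmin in *; rcases; lra.

Definition relcont1 (f : R -> R) (a b : R) : Prop :=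
  forall x, a <= x <= b -> forall eps, 0 < eps -> exists delta, 0 < delta /\
    forall y, a <= y <= b -> Rabs (y - x) < delta -> Rabs (f y - f x) < eps.

Lemma dpl_ext f x l l' : derivable_pt_lim f x l -> l = l' -> derivable_pt_lim f x l'.
Proof. intros H ->; exact H. Qed.

Lemma D_plus f g x lf lg : derivable_pt_lim f x lf -> derivable_pt_lim g x lg ->
  derivable_pt_lim (fun y => f y + g y) x (lf + lg).
Proof. intros; exact (derivable_pt_lim_plus f g x lf lg H H0). Qed.
Lemma D_minus f g x lf lg : derivable_pt_lim f x lf -> derivable_pt_lim g x lg ->
  derivable_pt_lim (fun y => f y - g y) x (lf - lg).
Proof. intros; exact (derivable_pt_lim_minus f g x lf lg H H0). Qed.
Lemma D_mult f g x lf lg : derivable_pt_lim f x lf -> derivable_pt_lim g x lg ->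
  derivable_pt_lim (fun y => f y * g y) x (lf * g x + f x * lg).
Proof. intros; exact (derivable_pt_lim_mult f g x lf lg H H0). Qed.
Lemma D_id x : derivable_pt_lim (fun y => y) x 1.
Proof. exact (derivable_pt_lim_id x). Qed.
Lemma D_const a x : derivable_pt_lim (fun _ => a) x 0.
Proof. exact (derivable_pt_lim_const a x). Qed.
Lemma D_div f g x lf lg : derivable_pt_lim f x lf -> derivable_pt_lim g x lg -> g x <> 0 ->
  derivable_pt_lim (fun y => f y / g y) x ((lf * g x - lg * f x) / (g x)²).
Proof. intros; exact (derivable_pt_lim_div f g x lf lg H H0 H1). Qed.

Lemma dpl_local f g x l d : 0 < d -> (forall y, Rabs (y - x) < d -> f y = g y) ->
  derivable_pt_lim f x l -> derivable_pt_lim g x l.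
Proof.
  intros Hd Heq H eps He. destruct (H eps He) as [del Hdel].
  pose proof (cond_pos del) as Hdp. assert (Hp : 0 < Rmin del d) by rsolve.
  exists (mkposreal _ Hp); simpl; intros h Hh0 Hh.
  rewrite <- (Heq (x + h)), <- (Heq x).
  - apply Hdel; auto. simpl in *; rsolve.
  - rsolve.
  - replace (x + h - x) with h by ring. rsolve.
Qed.

Lemma cont_pt_of f x : (forall eps, 0 < eps -> exists d, 0 < d /\
   forall y, Rabs (y - x) < d -> Rabs (f y - f x) < eps) -> continuity_pt f x.
Proof.
  intros H. unfold continuity_pt, continue_in, limit1_in, limit_in; simpl; unfold R_dist.
  intros eps He. destruct (H eps He) as [d [Hd Hy]]. exists d; split; auto.
  intros y [_ Hy']. apply Hy; auto.
Qed.

Lemma cont_pt_to f x : continuity_pt f x -> forall eps, 0 < eps -> exists d, 0 < d /\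
   forall y, Rabs (y - x) < d -> Rabs (f y - f x) < eps.
Proof.
  unfold continuity_pt, continue_in, limit1_in, limit_in; simpl; unfold R_dist.
  intros H eps He. destruct (H eps He) as [d [Hd Hy]]. exists d; split; auto.
  intros y Hy'. destruct (Req_dec y x) as [->|Hne].
  - replace (f x - f x) with 0 by ring. rewrite Rabs_R0; lra.
  - apply Hy; split; auto. unfold D_x, no_cond; auto.
Qed.

Definition clamp a b y := Rmax a (Rmin b y).

Lemma MVT_rel f g a b : a < b -> relcont1 f a b ->
  (forall x, a < x < b -> derivable_pt_lim f x (g x)) ->
  exists xi, a < xi < b /\ f b - f a = g xi * (b - a).
Proof.
  intros Hab Hc Hd.
  set (F := fun y => f (clamp a b y)).
  assert (HF : forall x, a < x < b -> derivable_pt_lim F x (g x)).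
  { intros x Hx. apply (dpl_local f F x (g x) (Rmin (x - a) (b - x))).
    - rsolve.
    - intros y Hy. unfold F, clamp. f_equal. rsolve.
    - apply Hd; auto. }
  assert (HC : forall x, a <= x <= b -> continuity_pt F x).
  { intros x Hx. apply cont_pt_of. intros eps He.
    destruct (Hc x Hx eps He) as [d [Hd0 Hy]]. exists d; split; auto.
    intros y Hyx. unfold F.
    replace (clamp a b x) with x by (unfold clamp; rsolve).
    apply Hy. unfold clamp; rsolve. unfold clamp; rsolve. }
  pose (pr1 := fun c (P : a < c < b) => exist (fun l => derivable_pt_lim F c l) (g c) (HF c P)).
  pose (pr2 := fun c (P : a < c < b) => derivable_pt_id c).
  destruct (MVT F id a b pr1 pr2 Hab HC (fun c _ => derivable_continuous_pt _ _ (derivable_pt_id c)))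
    as [c [P Hc']].
  exists c; split; auto.
  simpl in Hc'. rewrite derive_pt_id in Hc'. unfold id in Hc'.
  unfold F, clamp in Hc'.
  replace (Rmax a (Rmin b b)) with b in Hc' by rsolve.
  replace (Rmax a (Rmin b a)) with a in Hc' by rsolve.
  lra.
Qed.


Lemma relcont_sub f a b a' b' : relcont1 f a b -> a <= a' -> b' <= b -> relcont1 f a' b'.
Proof.
  intros H H1 H2 x Hx eps He. destruct (H x ltac:(lra) eps He) as [d [Hd Hyy]].
  exists d; split; auto. intros y Hy Hyx. apply Hyy; auto; lra.
Qed.

Lemma incr_left f g a b : a < b -> relcont1 f a b -> relcont1 g a b ->
  (forall x, a < x < b -> derivable_pt_lim f x (g x)) -> 0 < g a ->
  exists x, a < x <= b /\ f a < f x.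
Proof.
  intros Hab Hf Hg Hd Hga.
  destruct (Hg a ltac:(lra) (g a) Hga) as [d [Hd0 Hy]].
  set (x := Rmin b (a + d / 2)).
  assert (Hx : a < x <= b) by (unfold x; rsolve).
  destruct (MVT_rel f g a x ltac:(lra) (relcont_sub f a b a x Hf ltac:(lra) ltac:(lra)))
    as [xi [Hxi Heq]].
  { intros y Hy0. apply Hd. lra. }
  exists x; split; auto.
  assert (Habs : Rabs (g xi - g a) < g a) by (apply Hy; [lra| unfold x in *; rsolve]).
  assert (0 < g xi) by rsolve.
  assert (0 < g xi * (x - a)) by (apply Rmult_lt_0_compat; lra). lra.
Qed.

Lemma incr_right f g a b : a < b -> relcont1 f a b -> relcont1 g a b ->
  (forall x, a < x < b -> derivable_pt_lim f x (g x)) -> g b < 0 ->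
  exists x, a <= x < b /\ f b < f x.
Proof.
  intros Hab Hf Hg Hd Hgb.
  destruct (Hg b ltac:(lra) (- g b) ltac:(lra)) as [d [Hd0 Hy]].
  set (x := Rmax a (b - d / 2)).
  assert (Hx : a <= x < b) by (unfold x; rsolve).
  destruct (MVT_rel f g x b ltac:(lra) (relcont_sub f a b x b Hf ltac:(lra) ltac:(lra)))
    as [xi [Hxi Heq]].
  { intros y Hy0. apply Hd. lra. }
  exists x; split; auto.
  assert (Habs : Rabs (g xi - g b) < - g b) by (apply Hy; [lra| unfold x in *; rsolve]).
  assert (g xi < 0) by rsolve.
  assert (g xi * (b - x) < 0).
  { assert (0 < - g xi * (b - x)) by (apply Rmult_lt_0_compat; lra). lra. }
  lra.
Qed.

Lemma sign_right f c l d : derivable_pt_lim f c l -> 0 < d ->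
  (forall h, 0 < h < d -> f (c + h) <= f c) -> l <= 0.
Proof.
  intros H Hd Hh. destruct (Rle_or_lt l 0) as [|Hl]; auto.
  destruct (H l Hl) as [del Hdel]. pose proof (cond_pos del).
  set (h := Rmin del d / 2).
  assert (Hh0 : 0 < h < d) by (unfold h; rsolve).
  assert (Hhd : Rabs h < del) by (unfold h; rsolve).
  specialize (Hdel h ltac:(lra) Hhd). specialize (Hh h Hh0).
  assert ((f (c + h) - f c) / h <= 0).
  { unfold Rdiv. assert (0 < / h) by (apply Rinv_0_lt_compat; lra). nra. }
  rsolve.
Qed.

Lemma sign_left f c l d : derivable_pt_lim f c l -> 0 < d ->
  (forall h, 0 < h < d -> f (c - h) <= f c) -> 0 <= l.
Proof.
  intros H Hd Hh. destruct (Rle_or_lt 0 l) as [|Hl]; auto.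
  destruct (H (-l) ltac:(lra)) as [del Hdel]. pose proof (cond_pos del).
  set (h := Rmin del d / 2).
  assert (Hh0 : 0 < h < d) by (unfold h; rsolve).
  assert (Hhd : Rabs (-h) < del) by (unfold h; rsolve).
  specialize (Hdel (-h) ltac:(lra) Hhd). specialize (Hh h Hh0).
  replace (c + - h) with (c - h) in Hdel by ring.
  assert (0 <= (f (c - h) - f c) / - h).
  { unfold Rdiv. assert (0 < / h) by (apply Rinv_0_lt_compat; lra).
    rewrite Rinv_opp. nra. }
  rsolve.
Qed.

Lemma max_deriv0 f c l d : derivable_pt_lim f c l -> 0 < d ->
  (forall y, Rabs (y - c) < d -> f y <= f c) -> l = 0.
Proof.
  intros H Hd Hy.
  assert (l <= 0).
  { apply (sign_right f c l d H Hd). intros h Hh. apply Hy. rsolve. }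
  assert (0 <= l).
  { apply (sign_left f c l d H Hd). intros h Hh. apply Hy. rsolve. }
  lra.
Qed.

Lemma max_deriv2 f g c l d : 0 < d -> g c = 0 -> derivable_pt_lim g c l ->
  (forall y, Rabs (y - c) < d -> derivable_pt_lim f y (g y) /\ f y <= f c) -> l <= 0.
Proof.
  intros Hd Hg0 Hg Hy. destruct (Rle_or_lt l 0) as [|Hl]; auto.
  destruct (Hg (l/2) ltac:(lra)) as [del Hdel]. pose proof (cond_pos del).
  set (h := Rmin del d / 2).
  assert (Hh0 : 0 < h < d) by (unfold h; rsolve).
  destruct (MVT_cor2 f g c (c + h) ltac:(lra)) as [xi [Heq Hxi]].
  { intros y Hy'. apply Hy. rsolve. }
  assert (Hgx : 0 < g xi).
  { specialize (Hdel (xi - c) ltac:(lra) ltac:(unfold h in *; rsolve)).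
    replace (c + (xi - c)) with xi in Hdel by ring. rewrite Hg0 in Hdel.
    assert (Hq : l / 2 < (g xi - 0) / (xi - c)) by rsolve.
    unfold Rdiv in Hq. assert (0 < / (xi - c)) by (apply Rinv_0_lt_compat; lra).
    destruct (Rle_or_lt (g xi) 0); auto. nra. }
  assert (f c < f (c + h)).
  { assert (0 < g xi * (c + h - c)) by (apply Rmult_lt_0_compat; lra). lra. }
  assert (f (c + h) <= f c) by (apply Hy; rsolve). lra.
Qed.

Lemma cover_lemma (a b : R) (P : R -> R -> Prop) : a <= b ->
  (forall u v u' v', P u v -> u <= u' -> v' <= v -> P u' v') ->
  (forall u v w z, P u v -> P w z -> u < w -> w < v -> v < z -> P u z) ->
  (forall x, a <= x <= b -> exists d, 0 < d /\ P (x - d) (x + d)) ->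
  exists u v, u < a /\ b < v /\ P u v.
Proof.
  intros Hab Hs Hg Hl.
  set (S := fun x => a <= x <= b /\ exists u v, u < a /\ x < v /\ P u v).
  assert (HSa : S a).
  { destruct (Hl a ltac:(lra)) as [d [Hd HP]]. split; [lra|]. exists (a - d), (a + d).
    repeat split; auto; lra. }
  destruct (completeness S) as [s [Hub Hlub]].
  { exists b. intros x [Hx _]. lra. }
  { exists a; auto. }
  assert (Has : a <= s) by (apply Hub; auto).
  assert (Hsb : s <= b) by (apply Hlub; intros x [Hx _]; lra).
  destruct (Hl s ltac:(lra)) as [d [Hd HP]].
  assert (Hx : exists x, S x /\ s - d < x).
  { apply NNPP; intro Hn. assert (s <= s - d); [|lra].
    apply Hlub. intros x Hx. destruct (Rle_or_lt x (s - d)); auto.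
    exfalso; apply Hn; exists x; auto. }
  destruct Hx as [x [[Hx1 [u [v [Hu [Hxv HPuv]]]]] Hsx]].
  assert (HUV : exists U V, U < a /\ s < V /\ P U V).
  { destruct (Rle_or_lt (s + d) v).
    - exists u, v. repeat split; auto; lra.
    - destruct (Rlt_or_le u (s - d)).
      + exists u, (s + d). repeat split; auto; try lra.
        apply (Hg u v (s - d) (s + d)); auto; lra.
      + exists (s - d), (s + d). repeat split; auto; lra. }
  destruct HUV as [U [V [HU [HV HPUV]]]].
  destruct (Rlt_or_le s b) as [Hsb'|Hsb'].
  - exfalso. set (x' := Rmin b ((s + V) / 2)).
    assert (S x'). { split. unfold x'; rsolve. exists U, V; repeat split; auto. unfold x'; rsolve. }
    assert (x' <= s) by (apply Hub; auto). unfold x' in *; rsolve.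
  - exists U, V. repeat split; auto; lra.
Qed.


Section TwoD.
Variables (Rb : R -> R) (L T : R).
Hypothesis HRb_cont : cont1_on Rb (fun t => 0 <= t < T).
Hypothesis HRb_range : forall t, 0 <= t < T -> 0 < Rb t < L.

Lemma slab (Q : R -> R -> R -> Prop) t : 0 <= t < T ->
  (forall M M' r s, Q M r s -> M <= M' -> Q M' r s) ->
  (forall r, Rb t <= r <= L -> exists d M, 0 < d /\ forall r' s, OmegaT Rb L T r' s ->
      Rabs (r' - r) < d -> Rabs (s - t) < d -> Q M r' s) ->
  exists d M, 0 < d /\ forall r s, OmegaT Rb L T r s -> Rabs (s - t) < d -> Q M r s.
Proof.
  intros Ht Hmono Hloc.
  pose proof (HRb_range t Ht) as HR.
  destruct (cover_lemma (Rb t) L (fun u w => exists d M, 0 < d /\ forall r' s,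
     OmegaT Rb L T r' s -> u < r' < w -> Rabs (s - t) < d -> Q M r' s)) as [u [w [Hu [Hw HP]]]].
  - lra.
  - intros u v u' v' [d [M [Hd H]]] H1 H2. exists d, M; split; auto.
    intros r' s Ho Hr Hs. apply H; auto; lra.
  - intros u v w' z [d1 [M1 [Hd1 H1]]] [d2 [M2 [Hd2 H2]]] H3 H4 H5.
    exists (Rmin d1 d2), (Rmax M1 M2); split; [rsolve|].
    intros r' s Ho Hr Hs. destruct (Rlt_or_le r' v).
    + apply (Hmono M1). apply H1; auto; [lra|rsolve]. rsolve.
    + apply (Hmono M2). apply H2; auto; [lra|rsolve]. rsolve.
  - intros x Hx. destruct (Hloc x Hx) as [d [M [Hd H]]]. exists d; split; auto.
    exists d, M; split; auto. intros r' s Ho Hr Hs. apply H; auto. rsolve.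
  - destruct HP as [d1 [M [Hd1 H1]]].
    destruct (HRb_cont t Ht (Rb t - u) ltac:(lra)) as [d2 [Hd2 H2]].
    exists (Rmin d1 d2), M; split; [rsolve|].
    intros r s Ho Hs. destruct Ho as [Hr Hs'].
    assert (Rabs (Rb s - Rb t) < Rb t - u) by (apply H2; [lra|rsolve]).
    apply H1; [split; auto| |rsolve]. split; rsolve.
Qed.

Lemma bounded2 f t0 : cont2_on f (OmegaT Rb L T) -> 0 <= t0 < T ->
  exists V, forall r s, OmegaT Rb L T r s -> s <= t0 -> Rabs (f r s) <= V.
Proof.
  intros Hf Ht0.
  destruct (cover_lemma 0 t0 (fun u w => exists V, forall r s,
     OmegaT Rb L T r s -> u < s < w -> Rabs (f r s) <= V)) as [u [w [Hu [Hw [V HV]]]]].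
  - lra.
  - intros u v u' v' [V H] H1 H2. exists V. intros r s Ho Hs. apply H; auto; lra.
  - intros u v w' z [V1 H1] [V2 H2] H3 H4 H5. exists (Rmax V1 V2).
    intros r s Ho Hs. destruct (Rlt_or_le s v).
    + specialize (H1 r s Ho ltac:(lra)). rsolve.
    + specialize (H2 r s Ho ltac:(lra)). rsolve.
  - intros t Ht.
    destruct (slab (fun M r s => Rabs (f r s) <= M) t ltac:(lra)) as [d [M [Hd H]]].
    + intros M M' r s H1 H2; lra.
    + intros r Hr. destruct (Hf r t ltac:(split; [auto|lra]) 1 ltac:(lra)) as [d [Hd H]].
      exists d, (Rabs (f r t) + 1); split; auto. intros r' s Ho H1 H2.
      specialize (H r' s Ho H1 H2). rsolve.
    + exists d; split; auto. exists M. intros r s Ho Hs. apply H; auto. rsolve.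
  - exists V. intros r s Ho Hs. apply HV; auto. destruct Ho. lra.
Qed.

Lemma extension z N t : cont2_on z (OmegaT Rb L T) -> 0 <= t < T ->
  (forall r, Rb t <= r <= L -> z r t < N) ->
  exists d, 0 < d /\ forall r s, OmegaT Rb L T r s -> Rabs (s - t) < d -> z r s < N.
Proof.
  intros Hz Ht Hlt.
  destruct (slab (fun _ r s => z r s < N) t Ht) as [d [M [Hd H]]].
  - auto.
  - intros r Hr. specialize (Hlt r Hr).
    destruct (Hz r t ltac:(split; [auto|lra]) (N - z r t) ltac:(lra)) as [d [Hd H]].
    exists d, 0; split; auto. intros r' s Ho H1 H2. specialize (H r' s Ho H1 H2). rsolve.
  - exists d; split; [auto|]. intros; eapply H; eauto.
Qed.

Lemma Rb_bounds t0 : 0 <= t0 < T ->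
  exists m Mx, 0 < m /\ Mx < L /\ forall s, 0 <= s <= t0 -> m <= Rb s <= Mx.
Proof.
  intros Ht0.
  destruct (cover_lemma 0 t0 (fun u w => exists m Mx, 0 < m /\ Mx < L /\ forall s,
     0 <= s < T -> u < s < w -> m <= Rb s <= Mx)) as [u [w [Hu [Hw [m [Mx [Hm [HM H]]]]]]]].
  - lra.
  - intros u v u' v' [m [Mx [H0 [H1 H]]]] H2 H3. exists m, Mx; repeat split; auto;
    intros; apply H; auto; lra.
  - intros u v w' z [m1 [M1 [Hm1 [HM1 H1]]]] [m2 [M2 [Hm2 [HM2 H2]]]] H3 H4 H5.
    exists (Rmin m1 m2), (Rmax M1 M2); split; [rsolve|split; [rsolve|]].
    intros s Hs Hs'. destruct (Rlt_or_le s v).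
    + specialize (H1 s Hs ltac:(lra)). rsolve.
    + specialize (H2 s Hs ltac:(lra)). rsolve.
  - intros t Ht. pose proof (HRb_range t ltac:(lra)) as HR.
    destruct (HRb_cont t ltac:(lra) (Rmin (Rb t) (L - Rb t) / 2) ltac:(rsolve)) as [d [Hd H]].
    exists d; split; auto. exists (Rb t / 2), ((Rb t + L) / 2).
    split; [lra|split; [lra|]]. intros s Hs Hs'.
    assert (Rabs (Rb s - Rb t) < Rmin (Rb t) (L - Rb t) / 2) by (apply H; auto; rsolve).
    rsolve.
  - exists m, Mx; repeat split; auto; apply H; lra.
Qed.

End TwoD.

Lemma cont2_minus f g D : cont2_on f D -> cont2_on g D -> cont2_on (fun r s => f r s - g r s) D.
Proof.
  intros Hf Hg r t HD eps He.
  destruct (Hf r t HD (eps/2) ltac:(lra)) as [d1 [Hd1 H1]].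
  destruct (Hg r t HD (eps/2) ltac:(lra)) as [d2 [Hd2 H2]].
  exists (Rmin d1 d2); split; [rsolve|]. intros r' t' HD' Hr Ht.
  specialize (H1 r' t' HD' ltac:(rsolve) ltac:(rsolve)).
  specialize (H2 r' t' HD' ltac:(rsolve) ltac:(rsolve)). rsolve.
Qed.

Lemma cont2_sep (g h : R -> R) D : (forall x, continuity_pt g x) -> (forall x, continuity_pt h x) ->
  cont2_on (fun r s => g r + h s) D.
Proof.
  intros Hg Hh r t HD eps He.
  destruct (cont_pt_to g r (Hg r) (eps/2) ltac:(lra)) as [d1 [Hd1 H1]].
  destruct (cont_pt_to h t (Hh t) (eps/2) ltac:(lra)) as [d2 [Hd2 H2]].
  exists (Rmin d1 d2); split; [rsolve|]. intros r' t' HD' Hr Ht.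
  specialize (H1 r' ltac:(rsolve)). specialize (H2 t' ltac:(rsolve)). rsolve.
Qed.

Lemma cont2_scal c f D : cont2_on f D -> cont2_on (fun r s => c * f r s) D.
Proof.
  intros Hf r t HD eps He.
  destruct (Hf r t HD (eps / (Rabs c + 1))) as [d [Hd H]].
  { apply Rdiv_lt_0_compat; [lra|]. pose proof (Rabs_pos c); lra. }
  exists d; split; auto. intros r' t' HD' Hr Ht. specialize (H r' t' HD' Hr Ht).
  rewrite <- Rmult_minus_distr_l, Rabs_mult.
  pose proof (Rabs_pos c). pose proof (Rabs_pos (f r' t' - f r t)).
  assert (Rabs (f r' t' - f r t) * (Rabs c + 1) < eps).
  { apply (Rmult_lt_compat_r (Rabs c + 1)) in H; [|lra].
    unfold Rdiv in H. rewrite Rmult_assoc, Rinv_l, Rmult_1_r in H; lra. }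
  nra.
Qed.

Lemma slice_relcont Rb L T f t : cont2_on f (OmegaT Rb L T) -> 0 <= t < T ->
  relcont1 (fun y => f y t) (Rb t) L.
Proof.
  intros Hf Ht x Hx eps He. destruct (Hf x t (conj Hx Ht) eps He) as [d [Hd H]].
  exists d; split; auto. intros y Hy Hyx. apply H; auto. split; auto.
  replace (t - t) with 0 by ring. rewrite Rabs_R0; auto.
Qed.


Lemma relcont_of_pt f a b : (forall x, a <= x <= b -> continuity_pt f x) -> relcont1 f a b.
Proof.
  intros H x Hx eps He. destruct (cont_pt_to f x (H x Hx) eps He) as [d [Hd Hy]].
  exists d; split; auto.
Qed.

Lemma relcont_plus f g a b : relcont1 f a b -> relcont1 g a b -> relcont1 (fun y => f y + g y) a b.
Proof.
  intros Hf Hg x Hx eps He.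
  destruct (Hf x Hx (eps/2) ltac:(lra)) as [d1 [Hd1 H1]].
  destruct (Hg x Hx (eps/2) ltac:(lra)) as [d2 [Hd2 H2]].
  exists (Rmin d1 d2); split; [rsolve|]. intros y Hy Hyx.
  specialize (H1 y Hy ltac:(rsolve)). specialize (H2 y Hy ltac:(rsolve)). rsolve.
Qed.

Lemma relcont_opp f a b : relcont1 f a b -> relcont1 (fun y => - f y) a b.
Proof.
  intros Hf x Hx eps He. destruct (Hf x Hx eps He) as [d [Hd H]].
  exists d; split; auto. intros y Hy Hyx. specialize (H y Hy Hyx). rsolve.
Qed.

Lemma relcont_minus f g a b : relcont1 f a b -> relcont1 g a b -> relcont1 (fun y => f y - g y) a b.
Proof.
  intros Hf Hg. apply (relcont_plus f (fun y => - g y)); auto. apply relcont_opp; auto.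
Qed.

Lemma relcont_mult f g a b : relcont1 f a b -> relcont1 g a b -> relcont1 (fun y => f y * g y) a b.
Proof.
  intros Hf Hg x Hx eps He.
  set (A := Rabs (f x)). set (B := Rabs (g x)).
  assert (HA : 0 <= A) by apply Rabs_pos. assert (HB : 0 <= B) by apply Rabs_pos.
  set (e1 := Rmin 1 (eps / (2 * (B + 1)))). set (e2 := eps / (2 * (A + 2))).
  assert (He1 : 0 < e1). { unfold e1. assert (0 < eps / (2 * (B + 1))) by (apply Rdiv_lt_0_compat; lra). rsolve. }
  assert (He2 : 0 < e2) by (apply Rdiv_lt_0_compat; lra).
  destruct (Hf x Hx e1 He1) as [d1 [Hd1 H1]].
  destruct (Hg x Hx e2 He2) as [d2 [Hd2 H2]].
  exists (Rmin d1 d2); split; [rsolve|]. intros y Hy Hyx.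
  specialize (H1 y Hy ltac:(rsolve)). specialize (H2 y Hy ltac:(rsolve)).
  replace (f y * g y - f x * g x) with (f y * (g y - g x) + g x * (f y - f x)) by ring.
  assert (Hfy : Rabs (f y) <= A + 1).
  { unfold e1, A in *. assert (Rabs (f y - f x) < 1) by rsolve. rsolve. }
  assert (T1 : Rabs (f y * (g y - g x)) <= (A + 1) * e2).
  { rewrite Rabs_mult. apply Rmult_le_compat; try apply Rabs_pos; lra. }
  assert (T2 : Rabs (g x * (f y - f x)) <= B * (eps / (2 * (B + 1)))).
  { rewrite Rabs_mult. apply Rmult_le_compat; try apply Rabs_pos; try (unfold B; lra).
    unfold e1 in H1. assert (Rmin 1 (eps / (2 * (B + 1))) <= eps / (2 * (B + 1))) by apply Rmin_r. lra. }
  assert (E1 : (A + 1) * e2 < eps / 2).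
  { unfold e2. replace ((A + 1) * (eps / (2 * (A + 2)))) with (eps / 2 - eps / (2 * (A + 2))) by (field; lra).
    assert (0 < eps / (2 * (A + 2))) by (apply Rdiv_lt_0_compat; lra). lra. }
  assert (E2 : B * (eps / (2 * (B + 1))) < eps / 2).
  { replace (B * (eps / (2 * (B + 1)))) with (eps / 2 - eps / (2 * (B + 1))) by (field; lra).
    assert (0 < eps / (2 * (B + 1))) by (apply Rdiv_lt_0_compat; lra). lra. }
  pose proof (Rabs_triang (f y * (g y - g x)) (g x * (f y - f x))). lra.
Qed.

Lemma Pres_lip beta x y : 0 < beta -> Rabs (Pres beta x - Pres beta y) <= beta * Rabs (x - y).
Proof.
  intros Hb. unfold Pres. unfold Rabs; rcases; nra.
Qed.

Lemma relcont_Pres beta rho a b : 0 < beta -> relcont1 rho a b -> relcont1 (fun y => Pres beta (rho y)) a b.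
Proof.
  intros Hb Hr x Hx eps He. destruct (Hr x Hx (eps / beta)) as [d [Hd H]].
  { apply Rdiv_lt_0_compat; lra. }
  exists d; split; auto. intros y Hy Hyx. specialize (H y Hy Hyx).
  pose proof (Pres_lip beta (rho y) (rho x) Hb).
  apply (Rmult_lt_compat_l beta) in H; auto.
  replace (beta * (eps / beta)) with eps in H by (field; lra). lra.
Qed.

Lemma Pres_bounds beta rm x : 0 < beta -> 1 <= rm -> 0 <= x < rm -> 0 <= Pres beta x <= beta * (rm - 1).
Proof. intros Hb Hr Hx. unfold Pres. rcases; nra. Qed.

Lemma Hsw_neg u : u < 0 -> Hsw u = 0.
Proof. intros Hu. unfold Hsw. rcases; lra. Qed.

Lemma dpl_zero_local f x d : 0 < d -> (forall y, Rabs (y - x) < d -> f y = 0) ->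
  derivable_pt_lim f x 0.
Proof.
  intros Hd H. apply (dpl_local (fun _ => 0) f x 0 d Hd).
  - intros y Hy; rewrite H; auto.
  - apply D_const.
Qed.

Lemma relcont_id a b : relcont1 (fun y => y) a b.
Proof. apply relcont_of_pt. intros. apply derivable_continuous_pt, derivable_pt_id. Qed.

Lemma relcont_const c a b : relcont1 (fun _ => c) a b.
Proof. apply relcont_of_pt. intros. apply derivable_continuous_pt, derivable_pt_const. Qed.

Lemma relcont_inv a b : 0 < a -> relcont1 (fun y => / y) a b.
Proof.
  intros Ha. apply relcont_of_pt. intros x Hx.
  apply (continuity_pt_inv (fun y => y)).
  apply derivable_continuous_pt, derivable_pt_id. lra.
Qed.

Lemma div_bound (a L beta B : R) (v vr vrr Pr rho : R -> R) : 0 < a < L -> 0 < beta ->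
  relcont1 v a L -> relcont1 vr a L -> relcont1 rho a L ->
  (forall y, a < y < L -> derivable_pt_lim v y (vr y)) ->
  (forall y, a < y < L -> derivable_pt_lim vr y (vrr y)) ->
  (forall y, a < y < L -> derivable_pt_lim (fun y => Pres beta (rho y)) y (Pr y)) ->
  (forall y, a < y < L -> / y * (vr y + y * vrr y) - v y / y ^ 2 = Pr y) ->
  v L = 0 -> vr a = Pres beta (rho a) ->
  (forall y, a <= y <= L -> Pres beta (rho y) <= B) -> 0 <= B ->
  forall y, a < y < L -> - B <= vr y + v y / y.
Proof.
  intros Ha Hb Hv Hvr Hrho Dv Dvr DP Heq HvL HvrA HPB HB.
  set (c0 := v a / a).
  set (G := fun y => vr y + v y / y - Pres beta (rho y)).
  assert (HGc : relcont1 G a L).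
  { unfold G. apply relcont_minus; [apply relcont_plus; auto|apply relcont_Pres; auto].
    unfold Rdiv. apply relcont_mult; auto. apply relcont_inv; lra. }
  assert (HGd : forall y, a < y < L -> derivable_pt_lim G y 0).
  { intros y Hy. unfold G.
    eapply dpl_ext.
    - apply D_minus; [apply D_plus; [apply Dvr; auto|]|apply DP; auto].
      apply D_div; [apply Dv; auto|apply D_id|lra].
    - specialize (Heq y Hy). rewrite <- Heq. unfold Rsqr. field. lra. }
  assert (HGa : G a = c0).
  { unfold G, c0. rewrite HvrA. ring. }
  assert (HG : forall y, a <= y <= L -> G y = c0).
  { intros y Hy. destruct (Req_dec y a) as [->|Hne]; auto.
    destruct (MVT_rel G (fun _ => 0) a y ltac:(lra) (relcont_sub G a L a y HGc ltac:(lra) ltac:(lra)))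
      as [xi [Hxi Hm]].
    { intros x Hx. apply HGd. lra. }
    lra. }
  set (k := (c0 + B) / 2).
  set (W := fun y => y * v y - k * (y * y)).
  assert (HWc : relcont1 W a L).
  { unfold W. apply relcont_minus; apply relcont_mult; auto using relcont_id, relcont_const.
    apply relcont_mult; apply relcont_id. }
  destruct (MVT_rel W (fun y => y * (Pres beta (rho y) - B)) a L ltac:(lra) HWc) as [xi [Hxi Hm]].
  { intros y Hy. unfold W. eapply dpl_ext.
    - apply D_minus; apply D_mult; auto using D_id, D_const. apply D_mult; apply D_id.
    - pose proof (HG y ltac:(lra)) as Hg. unfold G in Hg. unfold k.
      replace (v y) with (y * (c0 + Pres beta (rho y) - vr y)).
      + field.
      + assert (v y / y = c0 + Pres beta (rho y) - vr y) by lra.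
        rewrite <- H. field. lra. }
  assert (HWm : W L - W a <= 0).
  { rewrite Hm. cbv beta. pose proof (HPB xi ltac:(lra)). assert (xi * (Pres beta (rho xi) - B) <= 0) by nra. nra. }
  unfold W in HWm. rewrite HvL in HWm.
  assert (Hva : v a = c0 * a) by (unfold c0; field; lra).
  rewrite Hva in HWm. unfold k in HWm.
  assert (Hp : 0 <= (c0 + B) * (L * L + a * a)) by nra.
  assert (Hc0 : - B <= c0). { destruct (Rle_or_lt (- B) c0); auto. assert (0 < L * L + a * a) by nra. nra. }
  intros y Hy. pose proof (HG y ltac:(lra)) as Hg. unfold G in Hg.
  pose proof (Pres_bounds beta (rho y + 1) (rho y)). unfold Pres.
  assert (0 <= Pres beta (rho y)) by (unfold Pres; rcases; nra).
  lra.
Qed.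

Theorem lemma4p5
  (* standing constants *)
  (L R0 beta T : R)
  (HL : 0 < L) (HR0 : 0 < R0 < L) (Hbeta : 0 < beta) (HT : 0 < T)
  (* free boundary R in C^1([0,T)) *)
  (Rb Rb' : R -> R)
  (HRb0 : Rb 0 = R0)
  (HRb_range : forall t, 0 <= t < T -> 0 < Rb t < L)
  (HRb_der : forall t, 0 < t < T -> derivable_pt_lim Rb t (Rb' t))
  (HRb_cont : cont1_on Rb (fun t => 0 <= t < T))
  (HRb'_cont : cont1_on Rb' (fun t => 0 <= t < T))
  (* matrix density rho, classical on Omega_T *)
  (rho rho_r rho_t : R -> R -> R)
  (Hrho_cont : cont2_on rho (OmegaT Rb L T))
  (Hrho_r_cont : cont2_on rho_r (OmegaT Rb L T))
  (Hrho_t_cont : cont2_on rho_t (OmegaT Rb L T))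
  (Hrho_r : forall r t, OmegaI Rb L T r t ->
     derivable_pt_lim (fun y => rho y t) r (rho_r r t))
  (Hrho_t : forall r t, OmegaI Rb L T r t ->
     derivable_pt_lim (fun s => rho r s) t (rho_t r t))
  (* velocity v, twice continuously differentiable in r *)
  (v v_r v_rr P_r : R -> R -> R)
  (Hv_cont : cont2_on v (OmegaT Rb L T))
  (Hv_r_cont : cont2_on v_r (OmegaT Rb L T))
  (Hv_rr_cont : cont2_on v_rr (OmegaI Rb L T))
  (Hv_r : forall r t, OmegaI Rb L T r t ->
     derivable_pt_lim (fun y => v y t) r (v_r r t))
  (Hv_rr : forall r t, OmegaI Rb L T r t ->
     derivable_pt_lim (fun y => v_r y t) r (v_rr r t))
  (HP_r : forall r t, OmegaI Rb L T r t ->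
     derivable_pt_lim (fun y => Pres beta (rho y t)) r (P_r r t))
  (Hv_eq : forall r t, OmegaI Rb L T r t ->
     / r * (v_r r t + r * v_rr r t) - v r t / r ^ 2 = P_r r t)
  (Hv_L : forall t, 0 <= t < T -> v L t = 0)
  (Hv_R : forall t, 0 <= t < T -> v_r (Rb t) t = Pres beta (rho (Rb t) t))
  (Hlaw : forall t, 0 <= t < T -> Rb' t = v (Rb t) t)
  (* hypotheses of the lemma *)
  (rho_m : R) (Hrho_m : 1 < rho_m)
  (Hrho_bd : forall r t, OmegaT Rb L T r t -> 0 <= rho r t < rho_m)
  (b e e_r e_rr : R -> R -> R)
  (Hb_cont : cont2_on b (OmegaT Rb L T))
  (He_cont : cont2_on e (OmegaT Rb L T))
  (He_r_cont : cont2_on e_r (OmegaT Rb L T))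
  (He_rr_cont : cont2_on e_rr (OmegaI Rb L T))
  (Hb_nonneg : forall r t, OmegaT Rb L T r t -> 0 <= b r t)
  (He_nonneg : forall r t, OmegaT Rb L T r t -> 0 <= e r t)
  (He_r : forall r t, OmegaI Rb L T r t ->
     derivable_pt_lim (fun y => e y t) r (e_r r t))
  (He_rr : forall r t, OmegaI Rb L T r t ->
     derivable_pt_lim (fun y => e_r y t) r (e_rr r t))
  (gamma Dn chin nm knb kn lnb lnn ksg : R)
  (Hgamma : 0 <= gamma <= 1)
  (HDn : 0 < Dn) (Hchin : 0 < chin) (Hnm : 0 < nm) (Hknb : 0 < knb)
  (Hkn : 0 < kn) (Hlnb : 0 < lnb) (Hlnn : 0 < lnn) (Hksg : 0 < ksg)
  (* the cell density n: classical solution *)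
  (n n_r n_rr n_t : R -> R -> R)
  (Hn_cont : cont2_on n (OmegaT Rb L T))
  (Hn_r_cont : cont2_on n_r (OmegaT Rb L T))
  (Hn_rr_cont : cont2_on n_rr (OmegaI Rb L T))
  (Hn_t_cont : cont2_on n_t (OmegaI Rb L T))
  (Hn_r : forall r t, OmegaI Rb L T r t ->
     derivable_pt_lim (fun y => n y t) r (n_r r t))
  (Hn_rr : forall r t, OmegaI Rb L T r t ->
     derivable_pt_lim (fun y => n_r y t) r (n_rr r t))
  (Hn_t : forall r t, OmegaI Rb L T r t ->
     derivable_pt_lim (fun s => n r s) t (n_t r t))
  (Hn_nonneg : forall r t, OmegaT Rb L T r t -> 0 <= n r t)
  (Hn_eq : forall r t, OmegaI Rb L T r t ->
     exists a1 a2 a3,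
       derivable_pt_lim (fun y => y * v y t * n y t) r a1 /\
       derivable_pt_lim (fun y => y * Dn * n_r y t) r a2 /\
       derivable_pt_lim (fun y => y * chin * rho y t * n y t
                                   * Hsw (1 - n y t / nm) * Phi ksg (e_r y t)) r a3 /\
       n_t r t + / r * a1 =
         / r * a2 - / r * a3
         + knb * b r t * (e r t / (1 + e r t))
         + kn * n r t * (e r t / (1 + e r t))
         - lnb * n r t * b r t - lnn * (n r t) ^ 2)
  (Hn_bcL : forall t, 0 < t < T ->
     (1 - gamma) * n L t
     + gamma * L * (n_r L t - chin / Dn * rho L t * n L t
                     * Hsw (1 - n L t / nm) * Phi ksg (e_r L t)) = 0)
  (Hn_bcR : forall t, 0 < t < T -> n_r (Rb t) t = 0)
  (Hn_init : forall r, R0 <= r <= L -> n r 0 = 0) :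
  forall r t, OmegaT Rb L T r t ->
    0 <= n r t <=
      Rmax (knb / lnb) (Rmax ((kn + beta * (rho_m - 1)) / lnn) nm).
Proof.
  intros r0 t0 Hrt. pose proof Hrt as Hrt'. destruct Hrt' as [[Hr0a Hr0b] [Ht0a Ht0b]].
  split; [apply Hn_nonneg; auto|].
  set (B := beta * (rho_m - 1)).
  set (N := Rmax (knb / lnb) (Rmax ((kn + B) / lnn) nm)).
  assert (HN1 : knb / lnb <= N) by (unfold N; apply Rmax_l).
  assert (HN2 : (kn + B) / lnn <= N) by (unfold N; eapply Rle_trans; [apply Rmax_l|apply Rmax_r]).
  assert (HN3 : nm <= N) by (unfold N; eapply Rle_trans; [apply Rmax_r|apply Rmax_r]).
  assert (HB : 0 < B) by (unfold B; nra).
  assert (HN1' : knb <= lnb * N).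
  { apply (Rmult_le_compat_l lnb) in HN1; [|lra]. replace (lnb * (knb / lnb)) with knb in HN1 by (field; lra). lra. }
  assert (HN2' : kn + B <= lnn * N).
  { apply (Rmult_le_compat_l lnn) in HN2; [|lra]. replace (lnn * ((kn + B) / lnn)) with (kn + B) in HN2 by (field; lra). lra. }
  destruct (Rb_bounds Rb L T HRb_cont HRb_range t0 (conj Ht0a Ht0b)) as [m [Mx [Hm [HMx HRbb]]]].
  destruct (bounded2 Rb L T HRb_cont HRb_range v t0 Hv_cont (conj Ht0a Ht0b)) as [V HV].
  set (c := (Mx + L) / 2).
  set (K := 2 * Dn + 2 * Dn * L / m + 2 * Rabs V * L + 1).
  assert (HK : 0 < K).
  { unfold K. assert (0 <= 2 * Dn * L / m) by (apply Rmult_le_pos; [nra|apply Rlt_le, Rinv_0_lt_compat; lra]).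
    pose proof (Rabs_pos V). nra. }
  assert (Hmx : m <= Mx) by (destruct (HRbb 0 ltac:(lra)); lra).
  assert (Hclaim : forall eps, 0 < eps -> n r0 t0 <= N + eps * ((r0 - c) * (r0 - c) + K * t0)).
  2:{ set (A0 := (r0 - c) * (r0 - c) + K * t0) in *.
      assert (HA0 : 0 <= A0). { unfold A0. assert (0 <= K * t0) by (apply Rmult_le_pos; lra). assert (0 <= (r0 - c) * (r0 - c)) by apply Rle_0_sqr. lra. }
      destruct (Rle_or_lt (n r0 t0) N) as [|Hlt]; auto. exfalso.
      set (ee := (n r0 t0 - N) / (A0 + 1)).
      assert (He : 0 < ee) by (apply Rdiv_lt_0_compat; lra).
      specialize (Hclaim ee He).
      assert (ee * A0 < n r0 t0 - N).
      { unfold ee. replace ((n r0 t0 - N) / (A0 + 1) * A0) with ((n r0 t0 - N) - (n r0 t0 - N) / (A0 + 1)) by (field; lra).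
        unfold ee in He; lra. }
      lra. }
  intros eps Heps.
  set (z := fun r s => n r s - eps * ((r - c) * (r - c) + K * s)).
  assert (Hzc : cont2_on z (OmegaT Rb L T)).
  { apply (cont2_minus n (fun r s => eps * ((r - c) * (r - c) + K * s))); auto.
    apply (cont2_scal eps (fun r s => (r - c) * (r - c) + K * s)).
    apply (cont2_sep (fun r => (r - c) * (r - c)) (fun s => K * s)); intros x; reg. }
  set (S := fun t => 0 <= t <= t0 /\ forall s r, 0 <= s <= t -> Rb s <= r <= L -> z r s < N).
  assert (HN0 : 0 < N) by lra.
  assert (HS0 : S 0).
  { split; [lra|]. intros s r Hs Hr. assert (s = 0) by lra. subst s.
    unfold z. rewrite HRb0 in Hr. rewrite Hn_init by lra. assert (0 <= (r - c) * (r - c)) by apply Rle_0_sqr. rewrite Rmult_0_r, Rplus_0_r. nra. }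
  destruct (completeness S) as [ts [Hub Hlub]].
  { exists t0. intros x [Hx _]. lra. }
  { exists 0; auto. }
  assert (Hts0 : 0 <= ts) by (apply Hub; auto).
  assert (Hts1 : ts <= t0) by (apply Hlub; intros x [Hx _]; lra).
  assert (FA : forall s r, 0 <= s < ts -> Rb s <= r <= L -> z r s < N).
  { intros s r Hs Hr. apply NNPP; intro Hn.
    assert (ts <= s); [|lra]. apply Hlub. intros x [Hx Hx']. destruct (Rle_or_lt x s); auto.
    exfalso; apply Hn. apply (Hx' s r); auto; lra. }
  assert (FB : forall r, Rb ts <= r <= L -> z r ts <= N).
  { intros r Hr. destruct (Req_dec ts 0) as [Heq|Hne].
    { rewrite Heq in *. apply Rlt_le. apply (proj2 HS0 0 r); auto; lra. }
    destruct (Rle_or_lt (z r ts) N) as [|Hgt]; auto. exfalso.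
    assert (HtsT : 0 <= ts < T) by lra.
    pose proof (HRb_range ts HtsT) as HRts.
    destruct (Hzc r ts (conj Hr HtsT) (z r ts - N) ltac:(lra)) as [d [Hd Hzd]].
    set (r' := Rmin L (r + d / 2)).
    assert (Hr' : Rb ts < r' <= L /\ Rabs (r' - r) < d) by (unfold r'; rsolve).
    destruct (HRb_cont ts HtsT (r' - Rb ts) ltac:(lra)) as [d2 [Hd2 HR2]].
    set (s := ts - Rmin (Rmin d d2) ts / 2).
    assert (Hs : 0 <= s < ts /\ Rabs (s - ts) < d /\ Rabs (s - ts) < d2) by (unfold s; rsolve).
    assert (HRs : Rabs (Rb s - Rb ts) < r' - Rb ts) by (apply HR2; lra).
    assert (HO : OmegaT Rb L T r' s) by (split; [rsolve|lra]).
    specialize (Hzd r' s HO ltac:(lra) ltac:(lra)).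
    assert (z r' s < N) by (apply FA; [lra|rsolve]).
    rsolve. }
  destruct (Req_dec ts t0) as [Heq|Hne].
  { rewrite <- Heq. apply Rle_trans with (z r0 ts + eps * ((r0 - c) * (r0 - c) + K * ts)).
    - unfold z; lra.
    - rewrite Heq in *. pose proof (FB r0 ltac:(lra)). lra. }
  exfalso.
  assert (HtsT : 0 <= ts < T) by lra.
  assert (FC : exists rs, Rb ts <= rs <= L /\ z rs ts = N).
  { apply NNPP; intro Hn.
    assert (Hall : forall r, Rb ts <= r <= L -> z r ts < N).
    { intros r Hr. destruct (Rle_lt_or_eq _ _ (FB r Hr)); auto. exfalso; apply Hn; exists r; auto. }
    destruct (extension Rb L T HRb_cont HRb_range z N ts Hzc HtsT Hall) as [d [Hd Hext]].
    set (t' := Rmin t0 (ts + d / 2)).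
    assert (S t').
    { split; [unfold t'; rsolve|]. intros s r Hs Hr.
      destruct (Rlt_or_le s ts).
      - apply FA; auto; lra.
      - unfold t' in Hs. apply Hext; [split; [auto|rsolve]|]. rsolve. }
    assert (t' <= ts) by (apply Hub; auto). unfold t' in *; rsolve. }
  destruct FC as [rs [Hrs Hzrs]].
  assert (Htspos : 0 < ts).
  { destruct (Req_dec ts 0) as [Heq|]; [|lra]. rewrite Heq in *.
    pose proof (proj2 HS0 0 rs ltac:(lra) Hrs). lra. }
  assert (HtsT' : 0 < ts < T) by lra.
  set (a := Rb ts) in *.
  assert (Ha : m <= a <= Mx) by (apply HRbb; lra).
  assert (HaL : 0 < a < L) by (apply HRb_range; lra).
  assert (Hnrs : n rs ts = N + eps * ((rs - c) * (rs - c) + K * ts)) by (unfold z in Hzrs; lra).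
  assert (HnN : N < n rs ts). { rewrite Hnrs. assert (0 <= (rs - c) * (rs - c)) by apply Rle_0_sqr. assert (0 < K * ts) by (apply Rmult_lt_0_compat; lra). nra. }
  assert (Hcl : Mx < c < L) by (unfold c; lra).
  set (f := fun y => z y ts).
  set (g := fun y => n_r y ts - eps * (2 * (y - c))).
  assert (Hfc : relcont1 f a L) by (apply (slice_relcont Rb L T z ts Hzc HtsT)).
  assert (Hgc : relcont1 g a L).
  { unfold g. apply relcont_minus.
    - apply (slice_relcont Rb L T n_r ts Hn_r_cont HtsT).
    - apply relcont_mult; [apply relcont_const|]. apply relcont_mult; [apply relcont_const|].
      apply relcont_minus; [apply relcont_id|apply relcont_const]. }
  assert (Hfd : forall y, a < y < L -> derivable_pt_lim f y (g y)).
  { intros y Hy. unfold f, g, z. eapply dpl_ext.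
    - apply D_minus; [apply Hn_r; split; [exact Hy|lra]|].
      apply D_mult; [apply D_const|]. apply D_plus; [|apply D_mult; [apply D_const|apply D_const]].
      apply D_mult; apply D_minus; [apply D_id|apply D_const|apply D_id|apply D_const].
    - cbv beta; ring. }
  assert (Hfmax : forall y, a <= y <= L -> f y <= f rs).
  { intros y Hy. unfold f. rewrite Hzrs. apply FB; auto. }
  destruct (Rle_lt_or_eq _ _ (proj1 Hrs)) as [Hra|Hra].
  2:{
    pose proof (Hn_bcR ts HtsT') as Hb. fold a in Hb.
    assert (Hga : 0 < g a) by (unfold g; rewrite Hb; nra).
    destruct (incr_left f g a L ltac:(lra) Hfc Hgc Hfd Hga) as [x [Hx Hfx]].
    pose proof (Hfmax x ltac:(lra)). rewrite <- Hra in *. lra. }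
  destruct (Rle_lt_or_eq _ _ (proj2 Hrs)) as [HrL|HrL].
  2:{
    subst rs.
    pose proof (Hn_bcL ts HtsT') as Hbc.
    assert (Hneg : 1 - n L ts / nm < 0).
    { assert (Hq : n L ts / nm * nm = n L ts) by (field; lra). nra. }
    assert (Hbc2 : (1 - gamma) * n L ts + gamma * L * n_r L ts = 0).
    { rewrite <- Hbc. rewrite (Hsw_neg _ Hneg). ring. }
    assert (Hnr : n_r L ts <= 0).
    { destruct (Req_dec gamma 0) as [Hg0|Hg0].
      - exfalso. rewrite Hg0 in Hbc2. lra.
      - assert (Hgp : 0 < gamma) by lra.
        assert (gamma * L * n_r L ts <= 0) by nra.
        destruct (Rle_or_lt (n_r L ts) 0); auto.
        assert (0 < gamma * L * n_r L ts); [|lra].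
        apply Rmult_lt_0_compat; auto. apply Rmult_lt_0_compat; lra. }
    assert (HgL : g L < 0) by (unfold g; nra).
    destruct (incr_right f g a L ltac:(lra) Hfc Hgc Hfd HgL) as [x [Hx Hfx]].
    pose proof (Hfmax x ltac:(lra)). lra. }
  assert (HOI : OmegaI Rb L T rs ts) by (split; [split; auto|lra]).
  set (d0 := Rmin (rs - a) (L - rs)).
  assert (Hd0 : 0 < d0) by (unfold d0; rsolve).
  assert (Hnear : forall y, Rabs (y - rs) < d0 -> a < y < L) by (intros y Hy; unfold d0 in Hy; rsolve).
  assert (Hg0 : g rs = 0).
  { apply (max_deriv0 f rs (g rs) d0); auto. intros y Hy. apply Hfmax. pose proof (Hnear y Hy); lra. }
  assert (Hgd : derivable_pt_lim g rs (n_rr rs ts - eps * 2)).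
  { unfold g. eapply dpl_ext.
    - apply D_minus; [apply Hn_rr; auto|].
      apply D_mult; [apply D_const|]. apply D_mult; [apply D_const|].
      apply D_minus; [apply D_id|apply D_const].
    - cbv beta; ring. }
  assert (Hrr : n_rr rs ts - eps * 2 <= 0).
  { apply (max_deriv2 f g rs _ d0 Hd0 Hg0 Hgd). intros y Hy. pose proof (Hnear y Hy).
    split; [apply Hfd; auto|apply Hfmax; lra]. }
  assert (Hnr : n_r rs ts = eps * (2 * (rs - c))) by (unfold g in Hg0; lra).
  assert (Hphi : derivable_pt_lim (fun s => z rs s) ts (n_t rs ts - eps * K)).
  { unfold z. eapply dpl_ext.
    - apply D_minus; [apply Hn_t; auto|].
      apply D_mult; [apply D_const|]. apply D_plus; [apply D_const|].
      apply D_mult; [apply D_const|apply D_id].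
    - cbv beta; ring. }
  destruct (HRb_cont ts HtsT (rs - a) ltac:(lra)) as [d2 [Hd2 HR2]].
  assert (Hnt : 0 <= n_t rs ts - eps * K).
  { apply (sign_left (fun s => z rs s) ts _ (Rmin d2 ts) Hphi ltac:(rsolve)).
    intros h Hh. cbv beta. rewrite Hzrs. apply Rlt_le.
    assert (Hh' : Rabs (Rb (ts - h) - Rb ts) < rs - a) by (apply HR2; rsolve).
    apply FA; [rsolve|]. fold a in Hh'. rsolve. }
  destruct (Hn_eq rs ts HOI) as [a1 [a2 [a3 [H1 [H2 [H3 Heq]]]]]].
  assert (X1 : derivable_pt_lim (fun y => y * v y ts * n y ts) rs
     ((1 * v rs ts + rs * v_r rs ts) * n rs ts + rs * v rs ts * n_r rs ts)).
  { apply (D_mult (fun y => y * v y ts) (fun y => n y ts)); [apply (D_mult (fun y => y) (fun y => v y ts)); [apply D_id|apply Hv_r; auto]|apply Hn_r; auto]. }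
  assert (X2 : derivable_pt_lim (fun y => y * Dn * n_r y ts) rs
     ((1 * Dn + rs * 0) * n_r rs ts + rs * Dn * n_rr rs ts)).
  { apply (D_mult (fun y => y * Dn) (fun y => n_r y ts)); [apply (D_mult (fun y => y) (fun _ => Dn)); [apply D_id|apply D_const]|apply Hn_rr; auto]. }
  destruct (Hn_cont rs ts (conj Hrs HtsT) (n rs ts - nm) ltac:(lra)) as [d3 [Hd3 Hc3]].
  assert (X3 : derivable_pt_lim (fun y => y * chin * rho y ts * n y ts
                                   * Hsw (1 - n y ts / nm) * Phi ksg (e_r y ts)) rs 0).
  { apply (dpl_zero_local _ rs (Rmin d0 d3)); [rsolve|]. intros y Hy.
    assert (Hy0 : Rabs (y - rs) < d0) by rsolve.
    pose proof (Hnear y Hy0).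
    assert (Hny : Rabs (n y ts - n rs ts) < n rs ts - nm).
    { apply Hc3; [split; [change (Rb ts) with a; split; lra|lra]|rsolve|]. replace (ts - ts) with 0 by ring. rewrite Rabs_R0; lra. }
    assert (Hneg : 1 - n y ts / nm < 0).
    { assert (Hq : n y ts / nm * nm = n y ts) by (field; lra). assert (nm < n y ts) by rsolve. nra. }
    rewrite (Hsw_neg _ Hneg). ring. }
  rewrite (uniqueness_limite _ _ _ _ H1 X1), (uniqueness_limite _ _ _ _ H2 X2),
          (uniqueness_limite _ _ _ _ H3 X3) in Heq.
  assert (HPB : forall y, a <= y <= L -> Pres beta (rho y ts) <= B).
  { intros y Hy. apply (Pres_bounds beta rho_m (rho y ts) Hbeta ltac:(lra)). apply Hrho_bd. split; auto; lra. }
  pose proof (div_bound a L beta B (fun y => v y ts) (fun y => v_r y ts) (fun y => v_rr y ts)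
     (fun y => P_r y ts) (fun y => rho y ts) HaL Hbeta
     (slice_relcont Rb L T v ts Hv_cont HtsT) (slice_relcont Rb L T v_r ts Hv_r_cont HtsT)
     (slice_relcont Rb L T rho ts Hrho_cont HtsT)
     (fun y Hy => Hv_r y ts (conj Hy HtsT')) (fun y Hy => Hv_rr y ts (conj Hy HtsT'))
     (fun y Hy => HP_r y ts (conj Hy HtsT')) (fun y Hy => Hv_eq y ts (conj Hy HtsT'))
     (Hv_L ts HtsT) (Hv_R ts HtsT) HPB ltac:(lra) rs (conj Hra HrL)) as Hdiv.
  cbv beta in Hdiv.
  assert (Hvb : Rabs (v rs ts) <= Rabs V).
  { eapply Rle_trans; [apply (HV rs ts (conj Hrs HtsT)); lra|apply Rle_abs]. }
  assert (Hrs0 : 0 < rs) by lra.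
  assert (HOT : OmegaT Rb L T rs ts) by (split; auto).
  pose proof (Hb_nonneg rs ts HOT) as Hbn. pose proof (He_nonneg rs ts HOT) as Hen.
  set (nn := n rs ts) in *. set (bb := b rs ts) in *. set (ee := e rs ts) in *.
  set (vv := v rs ts) in *. set (vr := v_r rs ts) in *. set (nr := n_r rs ts) in *.
  set (nrr := n_rr rs ts) in *. set (nt := n_t rs ts) in *.
  set (E := ee / (1 + ee)) in *.
  assert (HE : 0 <= E <= 1).
  { assert (HE' : E * (1 + ee) = ee) by (unfold E; field; lra). split; nra. }
  set (Sx := knb * bb * E + kn * nn * E - lnb * nn * bb - lnn * nn ^ 2).
  assert (Hnt_eq : nt = Dn * nr / rs + Dn * nrr - (vr + vv / rs) * nn - vv * nr + Sx).
  { assert (nt = / rs * ((1 * Dn + rs * 0) * nr + rs * Dn * nrr) - / rs * 0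
        + knb * bb * E + kn * nn * E - lnb * nn * bb - lnn * nn ^ 2
        - / rs * ((1 * vv + rs * vr) * nn + rs * vv * nr)) by lra.
    rewrite H. unfold Sx. field. lra. }
  assert (HSx : Sx + B * nn <= 0).
  { assert (Hnn : N <= nn) by lra.
    assert (bb * (knb * E - lnb * nn) <= 0).
    { assert (knb * E <= knb) by nra. assert (lnb * N <= lnb * nn) by nra. nra. }
    assert (nn * (kn * E + B - lnn * nn) <= 0).
    { assert (kn * E <= kn) by nra. assert (lnn * N <= lnn * nn) by nra. nra. }
    unfold Sx. nra. }
  assert (T1 : Dn * nr / rs <= eps * (2 * Dn * L / m)).
  { rewrite Hnr.
    replace (Dn * (eps * (2 * (rs - c))) / rs) with (eps * (2 * Dn) * ((rs - c) / rs)) by (field; lra).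
    replace (eps * (2 * Dn * L / m)) with (eps * (2 * Dn) * (L / m)) by (field; lra).
    apply Rmult_le_compat_l; [nra|].
    unfold Rdiv. apply Rle_trans with (L * / rs).
    - apply Rmult_le_compat_r; [apply Rlt_le, Rinv_0_lt_compat; lra|lra].
    - apply Rmult_le_compat_l; [lra|]. apply Rinv_le_contravar; lra. }
  assert (T2 : Dn * nrr <= eps * (2 * Dn)) by nra.
  assert (T3 : - ((vr + vv / rs) * nn) <= B * nn) by nra.
  assert (T4 : - (vv * nr) <= eps * (2 * Rabs V * L)).
  { rewrite Hnr.
    assert (Hrc : Rabs (rs - c) <= L) by rsolve.
    assert (Habs : Rabs (vv * (rs - c)) <= Rabs V * L).
    { rewrite Rabs_mult. apply Rmult_le_compat; auto using Rabs_pos. }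
    assert (- (vv * (rs - c)) <= Rabs V * L).
    { eapply Rle_trans; [|exact Habs]. rewrite <- Rabs_Ropp. apply Rle_abs. }
    replace (- (vv * (eps * (2 * (rs - c))))) with (eps * 2 * (- (vv * (rs - c)))) by ring.
    replace (eps * (2 * Rabs V * L)) with (eps * 2 * (Rabs V * L)) by ring.
    apply Rmult_le_compat_l; lra. }
  assert (HKe : eps * K = eps * (2 * Dn) + eps * (2 * Dn * L / m) + eps * (2 * Rabs V * L) + eps)
    by (unfold K; ring).
  lra.
Qed.
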